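(* (1) For $\eta=n_1\omega_1+\dots+n_r\omega_r\in P^+$, $|\mathcal B^{r-1/2}(\eta)|=\prod_{i=1}^r\left(\binom{2r-1}{i}-\binom{2r-1}{i-2}\right)^{n_i}$. (2) For $\lambda=m_1\omega_1+\dots+m_r\omega_r\in P^+$, $|\mathcal B^{r}(\lambda)|=\prod_{i=1}^r\left(\binom{2r}{i}-\binom{2r}{i-2}\right)^{m_i}$.
   Context: Fix $r\ge1$, $\mathfrak g=\mathfrak{sp}_{2r}$ (matrices with rows/columns indexed $1,\dots,r,-r,\dots,-1$ and $a_{i,j}=-\mathrm{sgn}(i)\mathrm{sgn}(j)a_{-j,-i}$), root vectors $x^-_{i,j-1}=E_{j,i}-E_{-i,-j}$, $x^-_{i,\overline{j}}=E_{-j,i}+E_{-i,j}$ ($1\le i<j\le r$), $x^-_{i,\overline{i}}=E_{-i,i}$; fundamental weights $\omega_i=\varepsilon_1+\dots+\varepsilon_i$, $P^+=\sum\mathbb N\omega_i$; for $\mu=\sum n_i\omega_i$ write $\mu_i=n_i+\dots+n_r$. Binomials $\binom{n}{k}$ with $k<0$ are $0$. For a root vector $x$ and partition $\mathbf s=(\mathbf s(1)\le\dots\le\mathbf s(\ell))\in\mathbb N^\ell$, $\mathbf x(\ell,\mathbf s)=(x\otimes t^{\mathbf s(1)})\cdots(x\otimes t^{\mathbf s(\ell)})\in\mathbf U(\mathfrak g\otimes\mathbb C[t])$ ($=1$ if $\ell=0$); $\mathbf s$ fits into $(\ell,\ell')$ if $\mathbf s(\ell)\le\ell'$. A pattern with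 bounding sequence $\lambda$: integers $\eta^j_i,\lambda^j_i$ ($1\le i\le j\le r$), $\lambda^r_i=\lambda_i$, with $\lambda^j_i\ge\eta^j_i\ge\lambda^j_{i+1}$ ($1\le i\le j\le r$, $\lambda^j_{j+1}=0$) and $\eta^{j+1}_i\ge\lambda^j_i\ge\eta^{j+1}_{i+1}$ ($1\le i\le j<r$). A restricted pattern with bounding sequence $\eta$: integers $\eta^j_i$ ($1\le i\le j\le r$) and $\lambda^j_i$ ($1\le i\le j< r$), $\eta^r_i=\eta_i$, with $\lambda^j_i\ge\eta^j_i\ge\lambda^j_{i+1}$ and $\eta^{j+1}_i\ge\lambda^j_i\ge\eta^{j+1}_{i+1}$ for $1\le i\le j<r$ ($\lambda^j_{j+1}=0$). Differences: $\ell_{i,\overline{j}}=\lambda^j_i-\eta^j_i$, $\ell'_{i,\overline{j}}=\eta^j_i-\lambda^j_{i+1}$, $\ell_{i,j}=\eta^{j+1}_i-\lambda^j_i$, $\ell'_{i,j}=\lambda^j_i-\eta^{j+1}_{i+1}$ (whenever defined). A POP (with bounding sequence $\lambda$) is a pattern plus partitions $\mathbf s_{i,\overline j}$ fitting $(\ell_{i,\overline j},\ell'_{i,\overline j})$ for $1\le i\le j\le r$ and $\mathbf s_{i,j}$ fitting $(\ell_{i,j},\ell'_{i,j})$ for $1\le i\le j<r$; a restricted POP (with bounding sequence $\eta$) is a restricted pattern plus such partitions $\mathbf s_{i,\overline j},\mathbf s_{i,j}$ for $1\le i\le j<r$. Put $X_{\overline j}=\prod_{i=1}^{j}\mathbf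 x^-_{i,\overline j}(\ell_{i,\overline j},\mathbf s_{i,\overline j})$, $X_j=\prod_{i=1}^{j}\mathbf x^-_{i,j}(\ell_{i,j},\mathbf s_{i,j})$ (increasing $i$). $\mathcal B^r(\lambda)$ is the set of elements $X_{\overline1}X_1\cdots X_{\overline{r-1}}X_{r-1}X_{\overline r}$ over POPs with bounding sequence $\lambda$, and $\mathcal B^{r-1/2}(\eta)$ the set of elements $X_{\overline1}X_1\cdots X_{\overline{r-1}}X_{r-1}$ over restricted POPs with bounding sequence $\eta$. *)

(* Defs.v *)
From mathcomp Require Import all_boot all_order all_algebra.
Set Implicit Arguments. Unset Strict Implicit. Unset Printing Implicit Defensive.
Import GRing.Theory Num.Theory.

(* A letter (x^-_{root} (x) t^e) of a monomial in U(sp_2r (x) C[t]):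
   ((b, i, j), e) stands for x^-_{i,\bar j} (x) t^e if b = true and
   x^-_{i,j} (x) t^e if b = false. *)
Definition letter := (bool * nat * nat * nat)%type.
Definition word := seq letter.

Definition binZ (n : nat) (k : int) : int :=
  match k with Posz k => Posz 'C(n, k) | Negz _ => 0%R end.

Definition wsum (r : nat) (n : nat -> nat) (i : nat) : nat :=
  \sum_(i <= k < r.+1) n k.

Definition fits (s : seq nat) (l l' : nat) : Prop :=
  size s = l /\ sorted leq s /\ all (fun x => x <= l') s.

Definition lamx (lam : nat -> nat -> nat) (j i : nat) : nat :=
  if i == j.+1 then 0 else lam j i.

(* pattern with bounding sequence bnd ; lam j i = lambda^j_i, eta j i = eta^j_i *)
Definition is_pattern (r : nat) (bnd : nat -> nat) (lam eta : nat -> nat -> nat) : Prop :=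
  (forall i, 1 <= i <= r -> lam r i = bnd i) /\
  (forall i j, 1 <= i -> i <= j -> j <= r ->
     lamx lam j (i.+1) <= eta j i <= lam j i) /\
  (forall i j, 1 <= i -> i <= j -> j < r ->
     eta j.+1 i.+1 <= lam j i <= eta j.+1 i).

Definition is_rpattern (r : nat) (bnd : nat -> nat) (lam eta : nat -> nat -> nat) : Prop :=
  (forall i, 1 <= i <= r -> eta r i = bnd i) /\
  (forall i j, 1 <= i -> i <= j -> j < r ->
     lamx lam j (i.+1) <= eta j i <= lam j i) /\
  (forall i j, 1 <= i -> i <= j -> j < r ->
     eta j.+1 i.+1 <= lam j i <= eta j.+1 i).

Definition lb  (lam eta : nat -> nat -> nat) i j := lam j i - eta j i.
Definition lb' (lam eta : nat -> nat -> nat) i j := eta j i - lamx lam j i.+1.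
Definition ln  (lam eta : nat -> nat -> nat) i j := eta j.+1 i - lam j i.
Definition ln' (lam eta : nat -> nat -> nat) i j := lam j i - eta j.+1 i.+1.

Definition xmon (b : bool) (i j : nat) (s : seq nat) : word :=
  [seq (b, i, j, e) | e <- s].

Definition Xbar (sb : nat -> nat -> seq nat) (j : nat) : word :=
  flatten [seq xmon true i j (sb i j) | i <- iota 1 j].
Definition Xpl (sn : nat -> nat -> seq nat) (j : nat) : word :=
  flatten [seq xmon false i j (sn i j) | i <- iota 1 j].

Definition Xhalf (r : nat) sb sn : word :=
  flatten [seq Xbar sb j ++ Xpl sn j | j <- iota 1 r.-1].

Definition Bfull (r : nat) (lambda : nat -> nat) (w : word) : Prop :=
  exists lam eta sb sn,
    is_pattern r lambda lam eta /\
    (forall i j, 1 <= i -> i <= j -> j <= r ->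
       fits (sb i j) (lb lam eta i j) (lb' lam eta i j)) /\
    (forall i j, 1 <= i -> i <= j -> j < r ->
       fits (sn i j) (ln lam eta i j) (ln' lam eta i j)) /\
    w = Xhalf r sb sn ++ Xbar sb r.

Definition Bhalf (r : nat) (etab : nat -> nat) (w : word) : Prop :=
  exists lam eta sb sn,
    is_rpattern r etab lam eta /\
    (forall i j, 1 <= i -> i <= j -> j < r ->
       fits (sb i j) (lb lam eta i j) (lb' lam eta i j)) /\
    (forall i j, 1 <= i -> i <= j -> j < r ->
       fits (sn i j) (ln lam eta i j) (ln' lam eta i j)) /\
    w = Xhalf r sb sn.

Definition has_card (P : word -> Prop) (c : int) : Prop :=
  exists s : seq word, uniq s /\ (forall w, P w <-> w \in s) /\ Posz (size s) = c.

(* Main.v *)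
Require Import Defs.
From mathcomp Require Import all_boot all_order all_algebra.
From mathcomp Require Import zify.
Import GRing.Theory Num.Theory.
Set Implicit Arguments. Unset Strict Implicit. Unset Printing Implicit Defensive.

Fixpoint qp (l : nat) : nat -> nat -> seq (seq nat) :=
  match l with
  | 0 => fun _ _ => [:: [::]]
  | l'.+1 => fix qd (d lo : nat) {struct d} :=
      match d with
      | 0 => [:: nseq l'.+1 lo]
      | d'.+1 => map (cons lo) (qp l' d lo) ++ qd d' lo.+1
      end
  end.

Lemma qp_S0 l lo : qp l.+1 0 lo = [:: nseq l.+1 lo].
Proof. by []. Qed.
Lemma qp_SS l d lo : qp l.+1 d.+1 lo = map (cons lo) (qp l d.+1 lo) ++ qp l.+1 d lo.+1.
Proof. by []. Qed.

Lemma qp_size l d lo : size (qp l d lo) = 'C(l + d, l).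
Proof.
elim: l d lo => [|l IH] d lo; first by rewrite bin0.
elim: d lo => [|d IHd] lo; first by rewrite qp_S0 addn0 binn.
rewrite qp_SS size_cat size_map IH IHd.
by rewrite [in RHS]addSn binS addSn -addnS; exact: addnC.
Qed.

Lemma qp_mem l d lo s :
  (s \in qp l d lo) = [&& size s == l, sorted leq s & all (fun x => lo <= x <= lo + d) s].
Proof.
elim: l d lo s => [|l IH] d lo s.
  by case: s => [|x s] //=; rewrite in_cons in_nil ?andbF.
elim: d lo s => [|d IHd] lo s.
  rewrite qp_S0 in_cons in_nil orbF addn0.
  apply/idP/idP.
    move/eqP=> ->; rewrite size_nseq eqxx andTb.
    apply/andP; split.
      by elim: (l) => //= n ->; rewrite leqnn.
    by apply/allP => x; rewrite mem_nseq => /andP[_ /eqP ->]; rewrite leqnn.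
  case/and3P => /eqP Hs _ Hall.
  have : all (pred1 lo) s.
    apply/allP => x xs; have /andP[h1 h2] := allP Hall x xs.
    by apply/eqP; apply/eqP; rewrite eqn_leq h1 h2.
  by move/all_pred1P => ->; rewrite Hs eqxx.
rewrite qp_SS mem_cat IHd.
apply/idP/idP.
  case/orP.
    case/mapP => t; rewrite IH => /and3P [/eqP Ht Hst Hat] ->.
    rewrite /= Ht eqxx /=.
    rewrite (path_sortedE leq_trans) Hst andbT leqnn /= addnS leqW ?leq_addr //=.
    apply/andP; split; first by apply/allP => x /(allP Hat) /andP[].
    by apply/allP => x /(allP Hat) /andP[-> /=]; rewrite addnS.
  case/and3P => -> -> /= /allP Ha; apply/allP => x /Ha /andP[h1 h2].
  by rewrite ltnW //= addnS -addSn.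
case: s => [|x s] //= /and3P [Hsz Hso /andP[/andP[Hx1 Hx2] Hall]].
have Hso' := Hso; rewrite (path_sortedE leq_trans) in Hso'.
case/andP: Hso' => Hxs Hss.
case: (ltngtP lo x) => Hlx.
- apply/orP; right; rewrite /= Hsz Hso /=.
  apply/andP; split; first by lia.
  apply/allP => y ys; have := allP Hxs y ys; have /andP[_ Hy] := allP Hall y ys.
  by move=> hxy; apply/andP; split; lia.
- by move: Hx1; rewrite leqNgt Hlx.
- apply/orP; left; apply/mapP; exists s; last by rewrite Hlx.
  rewrite IH -(eqn_add2r 1) !addn1 Hsz Hss /=.
  apply/allP => y ys; have := allP Hxs y ys; have := allP Hall y ys.
  by rewrite Hlx.
Qed.

Lemma qp_uniq l d lo : uniq (qp l d lo).
Proof.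
elim: l d lo => [|l IH] d lo; first by [].
elim: d lo => [|d IHd] lo; first by [].
rewrite qp_SS cat_uniq IHd andbT (map_inj_uniq (fun a b (E : lo :: a = lo :: b) => congr1 behead E)) IH andTb.
apply/hasPn => s Hs. move: Hs. rewrite qp_mem. case: s => [|x s] //= /and3P[_ _ /andP[/andP[h _] _]].
apply/mapP => [[t _ [E _]]]; by move: h; rewrite E ltnn.
Qed.

Definition parts l l' := qp l l' 0.

Lemma parts_mem s l l' : s \in parts l l' <-> fits s l l'.
Proof.
rewrite /parts qp_mem /fits; split.
  case/and3P => /eqP -> -> /allP H; split=> //; split=> //.
  by apply/allP => x /H.
case=> -> [-> /allP H]; rewrite eqxx /=; apply/allP => x /H; by [].
Qed.

Definition choices (hi lo : nat) : seq (nat * seq nat) :=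
  [seq (x, s) | x <- iota lo (hi.+1 - lo), s <- parts (hi - x) (x - lo)].

Fixpoint layer (b : bool) (j : nat) (hi lo : nat -> nat) (i n : nat)
  : seq (seq nat * word) :=
  if n is n'.+1 then
    [seq (c.1 :: p.1, xmon b i j c.2 ++ p.2) | c <- choices (hi i) (lo i),
                                                p <- layer b j hi lo i.+1 n']
  else [:: ([::], [::])].

Lemma mem_choices c hi lo :
  c \in choices hi lo <-> lo <= c.1 <= hi /\ fits c.2 (hi - c.1) (c.1 - lo).
Proof.
split.
  case/allpairsPdep => x [s [Hx Hs ->]] /=.
  move: Hx; rewrite mem_iota => Hx; split; first by lia.
  by apply/parts_mem.
case: c => x s /= [Hx Hs]; apply/allpairsPdep; exists x, s; split=> //.
  by rewrite mem_iota; lia.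
by apply/parts_mem.
Qed.

Lemma choices_uniq hi lo : uniq (choices hi lo).
Proof.
apply: allpairs_uniq_dep; first exact: iota_uniq.
  by move=> x _; exact: qp_uniq.
by move=> [x s] [y t] _ _ /= [-> ->].
Qed.

Lemma mem_layer b j hi lo n i p :
  p \in layer b j hi lo i n <->
  exists x sb, (forall m, i <= m < i + n ->
                   lo m <= x m <= hi m /\ fits (sb m) (hi m - x m) (x m - lo m)) /\
     p = (map x (iota i n), flatten [seq xmon b m j (sb m) | m <- iota i n]).
Proof.
elim: n i p => [|n IH] i p /=.
  split.
    rewrite inE => /eqP ->; exists (fun _ => 0), (fun _ => [::]); split=> //.
    by move=> m; lia.
  by case=> x [sb [_ ->]]; rewrite inE.
split.
  case/allpairsPdep => c [p' [Hc Hp' ->]].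
  have [Hc1 Hc2] := (mem_choices c (hi i) (lo i)).1 Hc.
  have [x [sb [H ->]]] := (IH i.+1 p').1 Hp'.
  exists (fun m => if m == i then c.1 else x m), (fun m => if m == i then c.2 else sb m).
  split.
    move=> m Hm; case: eqP => [->|ne]; first by split.
    by apply: H; lia.
  rewrite /= eqxx; congr pair; first congr (_ :: _).
    apply/eq_in_map => m; rewrite mem_iota => Hm.
    by have -> : (m == i) = false by lia.
  congr (_ ++ _); congr flatten.
  apply/eq_in_map => m; rewrite mem_iota => Hm.
  by have -> : (m == i) = false by lia.
case=> x [sb [H ->]]; apply/allpairsPdep.
exists (x i, sb i), (map x (iota i.+1 n), flatten [seq xmon b m j (sb m) | m <- iota i.+1 n]).
split=> //.
  have := H i; rewrite leqnn addnS ltnS leq_addr => /(_ isT) [h1 h2].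
  by apply/mem_choices.
apply/IH; exists x, sb; split=> // m Hm; apply: H; lia.
Qed.

Lemma size_xmon b i j s : size (xmon b i j s) = size s.
Proof. by rewrite size_map. Qed.

Lemma layer_uniq b j hi lo n i : uniq (layer b j hi lo i n).
Proof.
elim: n i => [|n IH] i //=.
apply: allpairs_uniq; [exact: choices_uniq | exact: IH |].
move=> [c p] [c' p'] /allpairsP [[c1 p1] [Hc1 _ [E1 E2]]] /allpairsP [[c2 p2] [Hc2 _ [E3 E4]]].
subst c p c' p' => /= [[E5 E6 E7]].
have [h1 h2] := (mem_choices _ _ _).1 Hc1.
have [h3 h4] := (mem_choices _ _ _).1 Hc2.
have Hsz : size (xmon b i j c1.2) = size (xmon b i j c2.2).
  by rewrite !size_xmon h2.1 h4.1 E5.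
move/eqP: E7; rewrite eqseq_cat // => /andP [/eqP E8 /eqP E9].
have E10 : c1.2 = c2.2.
  apply: (inj_map (f := fun e : nat => (b, i, j, e))) => //.
  by move=> e e' [].
move: E5 E6 E8 E9 E10; clear.
by case: c1 p1 c2 p2 => [? ?] [? ?] [? ?] [? ?] /= -> -> _ -> ->.
Qed.

Lemma count_xmon b i j s m :
  count (fun l : letter => l.1.1.2 == m) (xmon b i j s) = if i == m then size s else 0.
Proof. by elim: s => [|e s IH] /=; [case: (i == m) | rewrite IH; case: (i == m)]. Qed.

Lemma count_flat b j (sb : nat -> seq nat) n i m :
  count (fun l : letter => l.1.1.2 == m) (flatten [seq xmon b k j (sb k) | k <- iota i n])
  = if i <= m < i + n then size (sb m) else 0.
Proof.
elim: n i => [|n IH] i /=.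
  by rewrite addn0; case: ifP => //; lia.
rewrite count_cat count_xmon IH.
case: (i =P m) => [<-|ne].
  by rewrite leqnn addnS ltnS leq_addr /= ltnn addn0.
by rewrite add0n; congr (if _ then _ else _); lia.
Qed.

Lemma layer_inj b j hi lo n i :
  {in layer b j hi lo i n &, forall p p', p.2 = p'.2 -> p = p'}.
Proof.
move=> p p' /mem_layer [x [sb [H ->]]] /mem_layer [x' [sb' [H' ->]]] /= E.
congr pair => //; apply/eq_in_map => m; rewrite mem_iota => Hm.
have := congr1 (count (fun l : letter => l.1.1.2 == m)) E.
rewrite !count_flat Hm.
have [h1 [h2 _]] := H m Hm; have [h3 [h4 _]] := H' m Hm.
rewrite h2 h4; lia.
Qed.

Lemma layer_letters b j hi lo n i p :
  p \in layer b j hi lo i n ->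
  all (fun l : letter => (l.1.1.1 == b) && (l.1.2 == j)) p.2.
Proof.
move=> /mem_layer [x [sb [_ ->]]] /=.
apply/allP => l /flattenP [w /mapP [k _ ->] /mapP [e _ ->]] /=.
by rewrite !eqxx.
Qed.

Definition fun_of (xs : seq nat) (m : nat) : nat := nth 0 xs m.-1.

Lemma fun_of_map x k m : 1 <= m <= k -> fun_of (map x (iota 1 k)) m = x m.
Proof.
move=> Hm; rewrite /fun_of (nth_map 0) ?size_iota; last by lia.
rewrite nth_iota; last by lia.
congr x; lia.
Qed.

Lemma layer_bounds b j hi lo k p :
  p \in layer b j hi lo 1 k -> forall m, 1 <= m <= k -> lo m <= fun_of p.1 m <= hi m.
Proof.
move=> /mem_layer [x [sb [H ->]]] m Hm /=.
rewrite fun_of_map //; have : 1 <= m < 1 + k by lia. by move=> /H [].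
Qed.

Local Open Scope ring_scope.

Lemma sum_const_seq (T : Type) (l : seq T) (c : int) : \sum_(s <- l) c = c *+ size l.
Proof. by elim: l => [|a l IH]; rewrite ?big_nil ?big_cons ?IH ?mulrS. Qed.

Lemma choices_sum hi lo (f : nat -> int) :
  \sum_(c <- choices hi lo) f c.1 =
  \sum_(x <- iota lo (hi.+1 - lo)) f x *+ 'C(hi - lo, hi - x).
Proof.
rewrite big_allpairs_dep /=; apply: eq_big_seq => x; rewrite mem_iota => Hx.
rewrite sum_const_seq /parts qp_size.
by have -> : ((hi - x) + (x - lo) = hi - lo)%N by lia.
Qed.

Lemma binom_sum (p q : int) lo hi : (lo <= hi)%N ->
  \sum_(x <- iota lo (hi.+1 - lo)) (p ^+ (x - lo) * q ^+ (hi - x)) *+ 'C(hi - lo, hi - x)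
  = (p + q) ^+ (hi - lo).
Proof.
move=> Hlh; have -> : (hi.+1 - lo = (hi - lo).+1)%N by lia.
have -> : hi = (lo + (hi - lo))%N by lia.
move: (hi - lo)%N => d; rewrite addKn.
rewrite -[lo]addn0 iotaDl big_map addn0.
rewrite addrC exprDn.
have -> : iota 0 d.+1 = index_iota 0 d.+1 by rewrite /index_iota subn0.
rewrite big_mkord; apply: eq_bigr => k _.
have Hk := ltn_ord k.
have -> : (lo + k - lo = k)%N by rewrite addKn.
have -> : (lo + d - (lo + k) = d - k)%N by lia.
rewrite bin_sub; last by lia.
by rewrite mulrC.
Qed.

Lemma bump0E m : bump 0 m = m.+1. Proof. by []. Qed.

Lemma layer_sum b j hi lo (phi : nat -> nat -> int) n i :
  \sum_(p <- layer b j hi lo i n) \prod_(m < n) phi (i + m)%N (nth 0%N p.1 m)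
  = \prod_(m < n) \sum_(c <- choices (hi (i + m)%N) (lo (i + m)%N)) phi (i + m)%N c.1.
Proof.
elim: n i => [|n IH] i /=.
  by rewrite big_seq1 !big_ord0.
rewrite big_allpairs_dep /= big_ord_recl /= addn0.
have E : \prod_(i0 < n) \sum_(c <- choices (hi (i + bump 0 i0)%N) (lo (i + bump 0 i0)%N)) phi (i + bump 0 i0)%N c.1 = \prod_(m < n) \sum_(c <- choices (hi (i.+1 + m)%N) (lo (i.+1+m)%N)) phi (i.+1+m)%N c.1.
  by apply: eq_bigr => m _; rewrite bump0E addnS -addSn.
rewrite E.
rewrite -(IH i.+1) big_distrl /=.
apply: eq_bigr => c _; rewrite big_distrr /=.
apply: eq_bigr => p _; rewrite big_ord_recl /= addn0.
congr (_ * _); apply: eq_bigr => m _.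
by rewrite bump0E addnS -addSn.
Qed.

Local Close Scope ring_scope.
Local Open Scope ring_scope.

Definition cnt (a : nat -> int) (k : nat) (x : nat -> nat) : int :=
  \prod_(m < k) a m.+1 ^+ (x m.+1 - (if m.+1 == k then 0 else x m.+2))%N.

Lemma cnt_conv (a : nat -> int) k (x hi lo : nat -> nat) :
  a 0%N = 1 ->
  (forall m, (1 <= m < k)%N -> lo m = hi m.+1) ->
  (forall m, (1 <= m <= k)%N -> lo m <= x m <= hi m)%N ->
  cnt a k x = a k ^+ lo k *
     \prod_(m < k) (a m.+1 ^+ (x m.+1 - lo m.+1) * a m ^+ (hi m.+1 - x m.+1)).
Proof.
move=> a0 Hlo Hx; case: k Hlo Hx => [|k] Hlo Hx.
  by rewrite /cnt !big_ord0 a0 expr1n mulr1.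
rewrite /cnt.
have E : forall m : 'I_k.+1,
   a m.+1 ^+ (x m.+1 - (if m.+1 == k.+1 then 0 else x m.+2))%N =
   a m.+1 ^+ (x m.+1 - lo m.+1) * a m.+1 ^+ (lo m.+1 - (if m.+1 == k.+1 then 0 else x m.+2))%N.
  move=> m; rewrite -exprD; congr (_ ^+ _).
  have Hm := ltn_ord m.
  have /andP [h1 h2] := Hx m.+1 ltac:(lia).
  case: eqP => [_|ne]; first by lia.
  have /andP [h3 h4] := Hx m.+2 ltac:(lia).
  have h5 := Hlo m.+1 ltac:(lia).
  lia.
under eq_bigr => m _ do rewrite E.
rewrite big_split /= [in RHS]big_split /= mulrCA; congr (_ * _).
rewrite big_ord_recr /= eqxx subn0 [in RHS]big_ord_recl /= a0 expr1n mul1r mulrC.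
congr (_ * _).
apply: eq_bigr => m _.
rewrite /bump /=.
have Hm := ltn_ord m.
have -> : (m.+1 == k.+1) = false by lia.
by rewrite Hlo //; lia.
Qed.

Lemma layer_count b j hi lo k (a : nat -> int) :
  a 0%N = 1 ->
  (forall m, (1 <= m < k)%N -> lo m = hi m.+1) ->
  (forall m, (1 <= m <= k)%N -> lo m <= hi m)%N ->
  \sum_(p <- layer b j hi lo 1 k) cnt a k (fun_of p.1) =
  a k ^+ lo k * \prod_(m < k) (a m.+1 + a m) ^+ (hi m.+1 - lo m.+1).
Proof.
move=> a0 Hlo Hlh.
pose phi := fun (i v : nat) => a i ^+ (v - lo i) * a i.-1 ^+ (hi i - v).
transitivity (\sum_(p <- layer b j hi lo 1 k)
   a k ^+ lo k * \prod_(m < k) phi (1 + m)%N (nth 0%N p.1 m)).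
  rewrite !big_seq; apply: eq_bigr => p Hp.
  rewrite (cnt_conv (hi := hi) (lo := lo)) //; last exact: layer_bounds Hp.
rewrite -mulr_sumr layer_sum; congr (_ * _); apply: eq_bigr => m _.
rewrite choices_sum add1n.
have Hm := ltn_ord m.
rewrite -(binom_sum _ _ (Hlh m.+1 ltac:(lia))).
by apply: eq_big_seq => y _.
Qed.

Definition hc_ext (P Q : word -> Prop) c :
  (forall w, P w <-> Q w) -> has_card P c -> has_card Q c.
Proof.
move=> H [s [us [ms ss]]]; exists s; split=> //; split=> // w.
by rewrite -H.
Qed.

Lemma filter_split (tp : pred letter) u t :
  all tp t -> all (predC tp) u -> filter tp (u ++ t) = t.
Proof.
move=> Ht Hu; rewrite filter_cat (all_filterP Ht).
suff -> : filter tp u = [::] by [].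
by elim: u Hu => //= l u IH /andP [Hl /IH ->]; rewrite (negbTE Hl).
Qed.

Lemma cat_injr (t : word) : injective (fun u : word => u ++ t).
Proof.
move=> u v /= E; have /eqP := E; rewrite eqseq_cat; first by case/andP => /eqP.
by have := congr1 size E; rewrite !size_cat => /addIn.
Qed.

Lemma card_glue (L : seq (seq nat * word)) (Q : seq nat -> word -> Prop)
  (c : seq nat -> int) (tp : pred letter) :
  uniq L ->
  {in L &, forall p p', p.2 = p'.2 -> p = p'} ->
  (forall p, p \in L -> all tp p.2) ->
  (forall p u, p \in L -> Q p.1 u -> all (predC tp) u) ->
  (forall p, p \in L -> has_card (Q p.1) (c p.1)) ->
  has_card (fun w => exists p, p \in L /\ exists u, Q p.1 u /\ w = u ++ p.2)
           (\sum_(p <- L) c p.1).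
Proof.
elim: L => [|p L IH] /=.
  move=> _ _ _ _ _; exists [::]; split=> //; split; last by rewrite big_nil.
  by move=> w; split=> // [[p []]].
move=> /andP [pL uL] inj tpall lowall hc.
have [s [us [ms ss]]] : has_card (fun w => exists p, p \in L /\ exists u, Q p.1 u /\ w = u ++ p.2)
           (\sum_(p <- L) c p.1).
  apply: IH => //.
  - by move=> x y xL yL; apply: inj; rewrite inE ?xL ?yL orbT.
  - by move=> x xL; apply: tpall; rewrite inE xL orbT.
  - by move=> x u xL; apply: lowall; rewrite inE xL orbT.
  - by move=> x xL; apply: hc; rewrite inE xL orbT.
have [sp [usp [msp ssp]]] := hc p (mem_head _ _).
exists (map (fun u => u ++ p.2) sp ++ s); split; [|split].
- rewrite cat_uniq us andbT (map_inj_uniq (@cat_injr p.2)) usp /=.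
  apply/hasPn => w ws; apply/negP => /mapP [u usp' E].
  have [p' [p'L [u' [Qu' E']]]] := (ms w).2 ws.
  have Hu : all (predC tp) u by apply: (lowall p); [exact: mem_head | apply/msp].
  have Hu' : all (predC tp) u' by apply: (lowall p'); [rewrite inE p'L orbT | ].
  have := congr1 (filter tp) (etrans (esym E) E').
  have Ht1 : all tp p.2 by apply: tpall; exact: mem_head.
  have Ht2 : all tp p'.2 by apply: tpall; rewrite inE p'L orbT.
  rewrite !filter_split //.
  move=> /inj E2; have := E2 (mem_head _ _); rewrite inE p'L orbT => /(_ isT) Epp.
  by move: pL; rewrite Epp p'L.
- move=> w; split.
    case=> p' [p'in [u [Qu ->]]]; rewrite mem_cat.
    move: p'in; rewrite inE => /orP [/eqP Ep|p'L].
      by subst p'; apply/orP; left; apply/mapP; exists u => //; apply/msp.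
    by apply/orP; right; apply/ms; exists p'; split=> //; exists u.
  rewrite mem_cat => /orP [/mapP [u usp' ->]|ws].
    by exists p; split; [exact: mem_head | exists u; split=> //; apply/msp].
  have [p' [p'L [u' [Qu' E']]]] := (ms w).2 ws.
  by exists p'; split; [rewrite inE p'L orbT | exists u'].
- by rewrite size_cat size_map PoszD ssp ss big_cons.
Qed.

Local Close Scope ring_scope.

Definition lofull r (lam : nat -> nat) i := if i == r then 0 else lam i.+1.

Lemma Bhalf_congr r f g w :
  (forall i, 1 <= i <= r -> f i = g i) -> Bhalf r f w -> Bhalf r g w.
Proof.
move=> H [la [et [sb [sn [[h1 [h2 h3]] rest]]]]].
exists la, et, sb, sn; split=> //; split=> // i Hi; rewrite -H //; exact: h1.
Qed.

Lemma Bfull_congr r f g w :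
  (forall i, 1 <= i <= r -> f i = g i) -> Bfull r f w -> Bfull r g w.
Proof.
move=> H [la [et [sb [sn [[h1 [h2 h3]] rest]]]]].
exists la, et, sb, sn; split=> //; split=> // i Hi; rewrite -H //; exact: h1.
Qed.

Lemma Xhalf_eq r sb sb' sn sn' :
  (forall i j, j < r -> sb' i j = sb i j) -> (forall i j, j < r -> sn' i j = sn i j) ->
  Xhalf r sb' sn' = Xhalf r sb sn.
Proof.
move=> Hb Hn; rewrite /Xhalf; congr flatten; apply/eq_in_map => j.
rewrite mem_iota => Hj; have Hjr : j < r by lia.
rewrite /Xbar /Xpl; congr (flatten _ ++ flatten _); apply: eq_map => i.
  by rewrite Hb.
by rewrite Hn.
Qed.

Lemma Xhalf_S k sb sn : 1 <= k ->
  Xhalf k.+1 sb sn = Xhalf k sb sn ++ (Xbar sb k ++ Xpl sn k).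
Proof.
case: k => // k _; rewrite /Xhalf (_ : k.+2.-1 = k.+1) // (_ : k.+1.-1 = k) //.
have -> : iota 1 k.+1 = iota 1 (k + 1) by rewrite addn1.
rewrite iotaD map_cat flatten_cat /= cats0.
by rewrite add1n.
Qed.

Lemma Bfull_char r lam w :
  Bfull r lam w <-> exists p, p \in layer true r lam (lofull r lam) 1 r /\
                    exists u, Bhalf r (fun_of p.1) u /\ w = u ++ p.2.
Proof.
split.
  case=> la [et [sb [sn [[P1 [P2 P3]] [Fb [Fn ->]]]]]].
  have Elx : forall m, 1 <= m <= r -> lamx la r m.+1 = lofull r lam m.
    move=> m Hm; rewrite /lamx /lofull eqSS; case: eqP => // ne.
    by rewrite P1 //; lia.
  exists (map (et r) (iota 1 r), Xbar sb r); split.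
    apply/mem_layer; exists (et r), (fun i => sb i r); split => // m Hm.
    have Hm' : 1 <= m <= r by lia.
    have := P2 m r ltac:(lia) ltac:(lia) (leqnn r); have := Fb m r ltac:(lia) ltac:(lia) (leqnn r).
    by rewrite /lb /lb' Elx // P1.
  exists (Xhalf r sb sn); split=> //.
  apply: (Bhalf_congr (f := et r)); first by move=> i Hi; rewrite fun_of_map.
  exists la, et, sb, sn; split.
    split=> //; split.
      by move=> i j h1 h2 h3; apply: P2 => //; lia.
    exact: P3.
  split; last by split.
  by move=> i j h1 h2 h3; apply: Fb => //; lia.
case=> p [/mem_layer [x [sbl [H ->]]] [u [Hu ->]]] /=.
have Hu' : Bhalf r x u by apply: (Bhalf_congr _ Hu) => i Hi; rewrite fun_of_map.
case: Hu' => la [et [sb [sn [[R1 [R2 R3]] [Fb [Fn ->]]]]]].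
exists (fun j i => if j == r then lam i else la j i), et,
       (fun i j => if j == r then sbl i else sb i j), sn.
split; [split; [|split] | split; [|split]].
- by move=> i Hi; rewrite eqxx.
- move=> i j h1 h2 h3; case: (j =P r) => [Ejr|ne].
    subst j; have [hx _] := H i ltac:(lia).
    rewrite /lamx /= eqxx R1 //; last by lia.
  have Hjr : j < r by lia.
  by rewrite /lamx /= (introF eqP ne); apply: R2.
- move=> i j h1 h2 h3; have ne : (j == r) = false by lia.
  by rewrite ne; apply: R3.
- move=> i j h1 h2 h3; case: (j =P r) => [Ejr|ne].
    subst j; have [_ hf] := H i ltac:(lia).
    rewrite /lb /lb' /lamx /= !eqxx R1 //; last by lia.
  have Hjr : j < r by lia.
  by rewrite /lb /lb' /lamx /= (introF eqP ne); apply: Fb.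
- move=> i j h1 h2 h3; have ne : (j == r) = false by lia.
  by rewrite /ln /ln' ne; apply: Fn.
- congr (_ ++ _).
    by apply: Xhalf_eq => // i j hj; have -> : (j == r) = false by lia.
  by rewrite /Xbar; congr flatten; apply: eq_map => i; rewrite eqxx.
Qed.

Lemma Bhalf_char k eta w : 1 <= k ->
  Bhalf k.+1 eta w <-> exists p, p \in layer false k eta (fun i => eta i.+1) 1 k /\
                    exists u, Bfull k (fun_of p.1) u /\ w = u ++ p.2.
Proof.
move=> k1; split.
  case=> la [et [sb [sn [[R1 [R2 R3]] [Fb [Fn ->]]]]]].
  exists (map (la k) (iota 1 k), Xpl sn k); split.
    apply/mem_layer; exists (la k), (fun i => sn i k); split => // m Hm.
    have := R3 m k ltac:(lia) ltac:(lia) (ltnSn k); have := Fn m k ltac:(lia) ltac:(lia) (ltnSn k).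
    by rewrite /ln /ln' !R1 //; lia.
  exists (Xhalf k sb sn ++ Xbar sb k); split; last by rewrite Xhalf_S // catA.
  apply: (Bfull_congr (f := la k)); first by move=> i Hi; rewrite fun_of_map.
  exists la, et, sb, sn; split.
    split=> //; split.
      by move=> i j h1 h2 h3; apply: R2 => //; lia.
    by move=> i j h1 h2 h3; apply: R3 => //; lia.
  split.
    by move=> i j h1 h2 h3; apply: Fb => //; lia.
  split=> //.
  by move=> i j h1 h2 h3; apply: Fn => //; lia.
case=> p [/mem_layer [x [snl [H ->]]] [u [Hu ->]]] /=.
have Hu' : Bfull k x u by apply: (Bfull_congr _ Hu) => i Hi; rewrite fun_of_map.
case: Hu' => la [et [sb [sn [[P1 [P2 P3]] [Fb [Fn ->]]]]]].
exists la, (fun j i => if j == k.+1 then eta i else et j i), sb,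
       (fun i j => if j == k then snl i else sn i j).
split; [split; [|split] | split; [|split]].
- by move=> i Hi; rewrite eqxx.
- move=> i j h1 h2 h3; have ne : (j == k.+1) = false by lia.
  by rewrite ne; apply: P2 => //; lia.
- move=> i j h1 h2 h3; case: (j =P k) => [Ejk|ne].
    subst j; have [hx _] := H i ltac:(lia).
    by rewrite eqxx P1 //; lia.
  have Hjk : j < k by lia.
  have -> : (j.+1 == k.+1) = false by lia.
  by apply: P3.
- move=> i j h1 h2 h3; have ne : (j == k.+1) = false by lia.
  by rewrite /lb /lb' ne; apply: Fb => //; lia.
- move=> i j h1 h2 h3; case: (j =P k) => [Ejk|ne].
    subst j; have [_ hf] := H i ltac:(lia).
    by rewrite /ln /ln' !eqxx P1 //; lia.
  have Hjk : j < k by lia.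
  have E : (j.+1 == k.+1) = false by lia.
  by rewrite /ln /ln' /= E; apply: Fn.
- rewrite Xhalf_S // catA; congr (_ ++ _).
    congr (_ ++ _); apply: Xhalf_eq => // i j hj; by have -> : (j == k) = false by lia.
  by rewrite /Xpl; congr flatten; apply: eq_map => i; rewrite eqxx.
Qed.

Lemma Xbar_letters sb j (l : letter) : l \in Xbar sb j -> l.1.1.1 = true /\ l.1.2 = j.
Proof. by case/flattenP => w /mapP [i _ ->] /mapP [e _ ->]. Qed.

Lemma Xpl_letters sn j (l : letter) : l \in Xpl sn j -> l.1.1.1 = false /\ l.1.2 = j.
Proof. by case/flattenP => w /mapP [i _ ->] /mapP [e _ ->]. Qed.

Lemma Xhalf_letters r sb sn (l : letter) : l \in Xhalf r sb sn -> l.1.2 < r.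
Proof.
case/flattenP => w /mapP [j]; rewrite mem_iota => Hj ->.
by rewrite mem_cat => /orP [/Xbar_letters [_ ->] | /Xpl_letters [_ ->]]; lia.
Qed.

Lemma Bhalf_low r eta u : Bhalf r eta u -> all (fun l : letter => l.1.2 < r) u.
Proof.
case=> la [et [sb [sn [_ [_ [_ ->]]]]]].
by apply/allP => l /Xhalf_letters.
Qed.

Lemma Bfull_low r lam u : Bfull r lam u ->
  all (fun l : letter => (l.1.2 < r) || ((l.1.2 == r) && l.1.1.1)) u.
Proof.
case=> la [et [sb [sn [_ [_ [_ ->]]]]]].
apply/allP => l; rewrite mem_cat => /orP [/Xhalf_letters -> //|/Xbar_letters [-> ->]].
by rewrite eqxx ltnn.
Qed.

Local Open Scope ring_scope.

Definition D (n i : nat) : int := binZ n i%:Z - binZ n (i%:Z - 2).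

Lemma D0 n : D n 0 = 1.
Proof. by rewrite /D /= bin0. Qed.

Lemma D1 n : D n 1 = 'C(n, 1)%:Z.
Proof. by rewrite /D /= subr0. Qed.

Lemma D_SS n m : D n m.+2 = 'C(n, m.+2)%:Z - 'C(n, m)%:Z.
Proof.
rewrite /D; have -> : (m.+2)%:Z - 2 = m%:Z by rewrite -[m.+2]addn2 PoszD addrK.
by [].
Qed.

Lemma D_pascal n i : D n.+1 i.+1 = D n i.+1 + D n i.
Proof.
case: i => [|[|i]].
- by rewrite D0 !D1 binS bin0 PoszD.
- by rewrite D1 !D_SS !binS !bin0 PoszD; lia.
- by rewrite !D_SS !binS !PoszD; lia.
Qed.

Lemma Dzero k : (1 <= k)%N -> D (2 * k) k.+1 = 0.
Proof.
case: k => // k _; rewrite D_SS.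
have -> : 'C(2 * k.+1, k.+2) = 'C(2 * k.+1, k).
  rewrite -bin_sub; last by lia.
  by congr binomial; lia.
by rewrite subrr.
Qed.

Definition decr r (f : nat -> nat) := forall i, (1 <= i < r)%N -> (f i.+1 <= f i)%N.
Definition HalfCnt r := forall eta, decr r eta -> has_card (Bhalf r eta) (cnt (D (2*r).-1) r eta).
Definition FullCnt r := forall lam, decr r lam -> has_card (Bfull r lam) (cnt (D (2*r)) r lam).

Lemma full_step r : (1 <= r)%N -> HalfCnt r -> FullCnt r.
Proof.
move=> r1 IH lam Hd.
have Hs : has_card (fun w => exists p, p \in layer true r lam (lofull r lam) 1 r /\
                    exists u, Bhalf r (fun_of p.1) u /\ w = u ++ p.2)
   (\sum_(p <- layer true r lam (lofull r lam) 1 r) cnt (D (2*r).-1) r (fun_of p.1)).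
  apply: (card_glue (L := layer true r lam (lofull r lam) 1 r) (Q := fun xs => Bhalf r (fun_of xs)) (c := fun xs => cnt (D (2*r).-1) r (fun_of xs)) (tp := fun l : letter => (l.1.1.1 == true) && (l.1.2 == r))).
  - exact: layer_uniq.
  - exact: layer_inj.
  - by move=> p Hp; exact: layer_letters Hp.
  - move=> p u Hp Hu; have := Bhalf_low Hu; apply: sub_all => l /= Hl.
    by rewrite (ltn_eqF Hl) andbF.
  - move=> p Hp; apply: IH => i Hi.
    have /andP[_ h1] := layer_bounds Hp (m := i.+1) ltac:(lia).
    have /andP[h2 _] := layer_bounds Hp (m := i) ltac:(lia).
    move: h2; rewrite /lofull; have -> : (i == r) = false by lia.
    lia.
have := hc_ext (Q := Bfull r lam) _ Hs.
move=> /(_ ltac:(move=> w; split=> H; [exact/Bfull_char | exact/Bfull_char])).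
rewrite (@layer_count _ _ _ _ _ (D (2*r).-1)).
- rewrite {1}/lofull eqxx expr0 mul1r.
  suff -> : \prod_(m < r) (D (2 * r).-1 m.+1 + D (2 * r).-1 m) ^+ (lam m.+1 - lofull r lam m.+1)
          = cnt (D (2 * r)) r lam by [].
  rewrite /cnt; apply: eq_bigr => m _; congr (_ ^+ _).
  rewrite [in RHS](_ : (2 * r)%N = ((2*r).-1).+1); last by lia.
  by rewrite D_pascal.
- exact: D0.
- by move=> m Hm; rewrite /lofull; have -> : (m == r) = false by lia.
- move=> m Hm; rewrite /lofull; case: eqP => // ne.
  apply: Hd; lia.
Qed.

Lemma half_step k : (1 <= k)%N -> FullCnt k -> HalfCnt k.+1.
Proof.
move=> k1 IH eta Hd.
have Hs : has_card (fun w => exists p, p \in layer false k eta (fun i => eta i.+1) 1 k /\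
                    exists u, Bfull k (fun_of p.1) u /\ w = u ++ p.2)
   (\sum_(p <- layer false k eta (fun i => eta i.+1) 1 k) cnt (D (2*k)) k (fun_of p.1)).
  apply: (card_glue (L := layer false k eta (fun i => eta i.+1) 1 k) (Q := fun xs => Bfull k (fun_of xs)) (c := fun xs => cnt (D (2*k)) k (fun_of xs)) (tp := fun l : letter => (l.1.1.1 == false) && (l.1.2 == k))).
  - exact: layer_uniq.
  - exact: layer_inj.
  - by move=> p Hp; exact: layer_letters Hp.
  - move=> p u Hp Hu; have := Bfull_low Hu; apply: sub_all => l /=.
    case/orP => [Hl|/andP [/eqP -> ->]] //.
    by rewrite (ltn_eqF Hl) andbF.
  - move=> p Hp; apply: IH => i Hi.
    have /andP[_ h1] := layer_bounds Hp (m := i.+1) ltac:(lia).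
    have /andP[h2 _] := layer_bounds Hp (m := i) ltac:(lia).
    lia.
have := hc_ext (Q := Bhalf k.+1 eta) _ Hs.
move=> /(_ ltac:(move=> w; split=> H; [exact/(Bhalf_char _ _ k1) | exact/(Bhalf_char _ _ k1)])).
rewrite (@layer_count _ _ _ _ _ (D (2*k))).
- suff -> : D (2 * k) k ^+ eta k.+1 *
      \prod_(m < k) (D (2 * k) m.+1 + D (2 * k) m) ^+ (eta m.+1 - eta m.+2)
          = cnt (D (2 * k.+1).-1) k.+1 eta by [].
  rewrite /cnt (_ : (2 * k.+1).-1 = (2 * k).+1); last by lia.
  set n := (2 * k)%N.
  rewrite big_ord_recr /= eqxx subn0 mulrC.
  rewrite D_pascal Dzero // add0r; congr (_ * _).
  apply: eq_bigr => m _; rewrite D_pascal.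
  by have -> : (m.+1 == k.+1) = false by (have := ltn_ord m; lia).
- exact: D0.
- by [].
- move=> m Hm; apply: Hd; lia.
Qed.

Lemma half_base : HalfCnt 1.
Proof.
move=> eta _.
exists [:: [::]]; split=> //; split.
  move=> w; rewrite inE; split.
    by case=> la [et [sb [sn [_ [_ [_ ->]]]]]].
  move/eqP => ->.
  exists (fun _ _ => 0%N), (fun _ i => eta i), (fun _ _ => [::]), (fun _ _ => [::]).
  split; [split; [by []|split] | split; [|split]] => //; move=> *; lia.
by rewrite /cnt big_ord1 /= /D /= expr1n.
Qed.

Lemma main_count r : (1 <= r)%N -> HalfCnt r /\ FullCnt r.
Proof.
elim: r => // r IH _; case: r IH => [|r] IH.
  by split; [exact: half_base | apply: full_step => //; exact: half_base].
have [_ F] := IH isT.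
have H := half_step (isT : (1 <= r.+1)%N) F.
by split=> //; apply: full_step.
Qed.

Lemma wsumS r n i : (i <= r)%N -> wsum r n i = (n i + wsum r n i.+1)%N.
Proof. by move=> Hi; rewrite /wsum big_ltn. Qed.

Lemma wsum_end r n : wsum r n r.+1 = 0%N.
Proof. by rewrite /wsum big_geq. Qed.

Lemma cnt_wsum (a : nat -> int) r n :
  cnt a r (wsum r n) = \prod_(1 <= i < r.+1) a i ^+ n i.
Proof.
rewrite big_add1 /= big_mkord /cnt; apply: eq_bigr => m _; congr (_ ^+ _).
have Hm := ltn_ord m.
case: eqP => [E|ne].
  by rewrite E wsumS // wsum_end addn0 subn0.
by rewrite wsumS ?addnK //; lia.
Qed.

Lemma wsum_decr r n : decr r (wsum r n).
Proof. by move=> i Hi; rewrite [X in (_ <= X)%N]wsumS ?leq_addl //; lia. Qed.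

Unset Implicit Arguments.

Theorem proposition3p2 (r : nat) (hr : (1 <= r)%N) :
  (forall n : nat -> nat,
     has_card (Bhalf r (wsum r n))
       (\prod_(1 <= i < r.+1)
          (binZ (2 * r).-1 i%:Z - binZ (2 * r).-1 (i%:Z - 2)) ^+ n i)) /\
  (forall m : nat -> nat,
     has_card (Bfull r (wsum r m))
       (\prod_(1 <= i < r.+1)
          (binZ (2 * r) i%:Z - binZ (2 * r) (i%:Z - 2)) ^+ m i)).
Proof.
have [H F] := main_count hr; split.
  move=> n; have := H _ (@wsum_decr r n); rewrite cnt_wsum; exact.
move=> n; have := F _ (@wsum_decr r n); rewrite cnt_wsum; exact.
Qed.
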